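(* Let $h\in\mathcal F(X)$. Then $h\diamond(f+g)=h\diamond f+h\diamond g$ holds for all $f,g\in\mathcal F(X)$ if and only if $h$ is skew convex.
   Context: Let $K$ be a skew field, $K^*=K\setminus\{0\}$, and let $X$ be a nonempty set on which $K^*$ acts on the left, written $(a,x)\mapsto{}^{a}x$. $\mathcal F(X)$ is the set of all functions $X\to K$ with pointwise addition; the constant function with value $a\in K$ is denoted $a$. The skew product of $f,g\in\mathcal F(X)$ is $(f\diamond g)(x)=f({}^{g(x)}x)\,g(x)$ if $g(x)\neq0$ and $0$ if $g(x)=0$. A function $f\in\mathcal F(X)$ is skew convex if $f\diamond(a+b)=f\diamond a+f\diamond b$ for all $a,b\in K$ (viewed as constant functions). *)

(* Defs.v *)
From mathcomp Require Import all_boot all_algebra.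
Set Implicit Arguments. Unset Strict Implicit. Unset Printing Implicit Defensive.
Import GRing.Theory.
Local Open Scope ring_scope.

(* A skew field K is modelled as a unitRingType (nontrivial ring with
   inverses for units) in which every nonzero element is a unit. *)
Definition skew_field_axiom (K : unitRingType) : Prop :=
  forall a : K, a != 0 -> a \is a GRing.unit.

(* A left action of K^* = K \ {0} on X, given by act : K -> X -> X
   (its values at 0 are irrelevant). *)
Definition left_action_Kstar (K : unitRingType) (X : Type)
  (act : K -> X -> X) : Prop :=
  (forall x, act 1 x = x) /\
  (forall a b x, a != 0 -> b != 0 -> act (a * b) x = act a (act b x)).

Definition fadd (K : unitRingType) (X : Type) (f g : X -> K) : X -> K :=
  fun x => f x + g x.


Definition skew_prod (K : unitRingType) (X : Type) (act : K -> X -> X)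
  (f g : X -> K) : X -> K :=
  fun x => if g x == 0 then 0 else f (act (g x) x) * g x.

Definition skew_convex (K : unitRingType) (X : Type) (act : K -> X -> X)
  (f : X -> K) : Prop :=
  forall a b : K,
    skew_prod act f (fun _ : X => a + b) =
    fadd (skew_prod act f (fun _ : X => a)) (skew_prod act f (fun _ : X => b)).

(* Main.v *)
Require Import Defs.
From mathcomp Require Import all_boot all_algebra.
From Stdlib Require Import FunctionalExtensionality.

Theorem lemma2p3 (K : unitRingType) (X : Type) (act : K -> X -> X)
  (HK : skew_field_axiom K) (x0 : X) (Hact : left_action_Kstar act)
  (h : X -> K) :
  (forall f g : X -> K,
     skew_prod act h (fadd f g) = fadd (skew_prod act h f) (skew_prod act h g))
  <-> skew_convex act h.
Proof.
split.
- move=> H a b. exact: (H (fun _ => a) (fun _ => b)).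
- move=> H f g. apply: functional_extensionality => x.
  have := congr1 (fun F => F x) (H (f x) (g x)).
  by rewrite /skew_prod /fadd /=.
Qed.
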